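(* Let $m\ge1$, $N\ge1$, let $F_1,\ldots,F_m:\{0,\ldots,2^N-1\}^m\to\{0,\ldots,2^N-1\}$ be arbitrary, and let $g=(g_1,\ldots,g_m)$ be the map on the decimal representation described in the context. Then at every point, with the integer parts $x_1,\ldots,x_m$ and the first sequence terms $w_1^1,\ldots,w_m^1$ held fixed, one has $\partial g_i/\partial y_i=2^N$ and $\partial g_i/\partial y_j=0$ for $i\neq j$, so the Jacobian matrix is $J=\mathrm{diag}(2^N,\ldots,2^N)$; consequently, with $\Phi_n=J^n$ and $\mu_k(\Phi_n^T\Phi_n)$ the $k$-th eigenvalue of $\Phi_n^T\Phi_n$, every Lyapunov exponent $\lambda(y_k)=\lim_{n\to+\infty}\frac{1}{2n}\ln|\mu_k(\Phi_n^T\Phi_n)|$, $k=1,\ldots,m$, equals $N\ln 2$.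
   Context: Take $Q=0$, $P=N$, so $D=\{0,1,\ldots,2^N-1\}$, each element written with $N$ binary digits; $x\cdot y$, $x+y$, $\overline{x}$ denote bitwise AND, OR and NOT on $N$-bit strings. A state consists of sequences $w_i=w_i^1w_i^2\ldots$ with $w_i^k\in D$ ($i=1,\ldots,m$) and integers $x_1,\ldots,x_m\in D$; one iteration maps it to the state with sequences $\sigma(w_i)=w_i^2w_i^3\ldots$ and integers $x_i'=(x_i\cdot\overline{w_i^1})+(F_i(x_1,\ldots,x_m)\cdot w_i^1)$. The decimal representation of a state is $y=(y_1,\ldots,y_m)$ with $y_i=x_i+\sum_{k=1}^{\infty}w_i^k2^{-Nk}$, and the induced map is $g_i(y_1,\ldots,y_m)=(x_i\cdot\overline{w_i^1})+(F_i(x_1,\ldots,x_m)\cdot w_i^1)+2^N\sum_{k=2}^{\infty}w_i^k2^{-Nk}$, i.e. the decimal representation of the image state. Partial derivatives are taken by varying only the tail terms $w_i^k$, $k\ge2$ (so that the integer parts and the first terms $w_i^1$ stay unchanged). *)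

(* Defs.v *)
From mathcomp Require Import all_boot all_order all_algebra.
From mathcomp Require Import all_classical all_reals all_analysis.
Set Implicit Arguments. Unset Strict Implicit. Unset Printing Implicit Defensive.
Import Order.TTheory GRing.Theory Num.Theory.
Local Open Scope ring_scope.

(* A state: integers x_i in D = {0,..,2^N-1} and sequences w_i over D.
   Convention: [sw s i k] is the term w_i^{k+1} (0-based index k). *)
Record state (m N : nat) := State {
  sx : 'I_m -> 'I_(2 ^ N)%N ;
  sw : 'I_m -> nat -> 'I_(2 ^ N)%N }.

(* bitwise NOT on N-bit strings *)
Definition bnot (N a : nat) : nat := ((2 ^ N).-1 - a)%N.

Definition next_int (m N : nat) (F : 'I_m -> ('I_m -> 'I_(2 ^ N)%N) -> 'I_(2 ^ N)%N)
  (s : state m N) (i : 'I_m) : nat :=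
  Nat.lor (Nat.land (sx s i) (bnot N (sw s i 0)))
          (Nat.land (F i (sx s)) (sw s i 0)).

Definition tsum (R : realType) (a : nat) (u : nat -> R) : R :=
  limn (fun n => \sum_(a <= k < n) u k).

Definition decrep (R : realType) (m N : nat) (s : state m N) (i : 'I_m) : R :=
  (sx s i)%:R + tsum 1 (fun k => (sw s i k.-1)%:R * (2%:R ^- (N * k))).

Definition gmap (R : realType) (m N : nat)
  (F : 'I_m -> ('I_m -> 'I_(2 ^ N)%N) -> 'I_(2 ^ N)%N) (s : state m N) (i : 'I_m) : R :=
  (next_int F s i)%:R +
  2%:R ^+ N * tsum 2 (fun k => (sw s i k.-1)%:R * (2%:R ^- (N * k))).

Definition tail_variation (m N : nat) (s s' : state m N) (j : 'I_m) : Prop :=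
  sx s' = sx s /\ (forall l, l != j -> sw s' l = sw s l) /\ sw s' j 0 = sw s j 0.

Definition partial_deriv (R : realType) (m N : nat)
  (F : 'I_m -> ('I_m -> 'I_(2 ^ N)%N) -> 'I_(2 ^ N)%N) (s : state m N) (i j : 'I_m) (L : R) : Prop :=
  (forall d : R, 0 < d -> exists s', tail_variation s s' j /\
      0 < `|decrep R s' j - decrep R s j| < d) /\
  (forall eps : R, 0 < eps -> exists2 d : R, 0 < d & forall s', tail_variation s s' j ->
      0 < `|decrep R s' j - decrep R s j| < d ->
      `|(gmap R F s' i - gmap R F s i) / (decrep R s' j - decrep R s j) - L| < eps).

Definition is_jacobian (R : realType) (m N : nat)
  (F : 'I_m -> ('I_m -> 'I_(2 ^ N)%N) -> 'I_(2 ^ N)%N) (s : state m N) (J : 'M[R]_m) : Prop :=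
  forall i j, partial_deriv F s i j (J i j).

Fixpoint mxpow (R : realType) (m : nat) (J : 'M[R]_m) (n : nat) : 'M[R]_m :=
  match n with 0 => 1%:M | n'.+1 => J *m mxpow J n' end.

(* Main.v *)
Require Import Defs.
From mathcomp Require Import all_boot all_order all_algebra.
From mathcomp Require Import all_classical all_reals all_analysis.
From mathcomp Require Import ring lra.
Import Order.TTheory GRing.Theory Num.Theory.
Import numFieldNormedType.Exports.
Local Open Scope classical_set_scope.
Local Open Scope ring_scope.

Definition useq (R : realType) (m N : nat) (s : state m N) (j : 'I_m) : nat -> R :=
  fun k => (sw s j k.-1)%:R * (2%:R ^- (N * k)).
Arguments useq R {m N}.

Lemma useq_ge0 (R : realType) m N (s : state m N) j k : 0 <= useq R s j k.
Proof. by rewrite /useq mulr_ge0 // invr_ge0 exprn_ge0. Qed.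

Lemma useq_le (R : realType) m N (hN : (0 < N)%N) (s : state m N) j k :
  useq R s j k <= 2%:R ^+ N * (2%:R^-1) ^+ k.
Proof.
rewrite /useq; apply: ler_pM.
- by [].
- by rewrite invr_ge0 exprn_ge0.
- by rewrite -natrX ler_nat ltnW.
- rewrite exprVn lef_pV2 ?posrE ?exprn_gt0 // -!natrX ler_nat.
  by rewrite leq_pexp2l // leq_pmull.
Qed.

Lemma useq_cvg (R : realType) m N (hN : (0 < N)%N) (s : state m N) j a :
  cvgn (fun n => \sum_(a <= k < n) useq R s j k).
Proof.
apply: nondecreasing_is_cvgn.
  by apply: nondecreasing_series => k _ _; apply: useq_ge0.
exists (2%:R ^+ N / (1 - 2%:R^-1)) => _ [n _ <-].
have H : \sum_(a <= k < n) useq R s j k <= series (geometric (2%:R ^+ N) (2%:R^-1)) n.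
  rewrite /series /=.
  have h1 : \sum_(a <= k < n) useq R s j k <= \sum_(a <= k < n) geometric (2%:R ^+ N : R) (2%:R^-1) k.
    by apply: ler_sum => k _; rewrite /geometric /=; exact: useq_le.
  apply: (le_trans h1).
  case: (leqP a n) => han.
    rewrite (@big_cat_nat _ _ _ a 0 n _ _ (leq0n a) han) /= lerDr.
    by apply: sumr_ge0 => k _; apply: geometric_ge0 => //; rewrite invr_ge0.
  rewrite [X in X <= _]big_geq ?(ltnW han) //.
  by apply: sumr_ge0 => k _; apply: geometric_ge0 => //; rewrite invr_ge0.
apply: (le_trans H); apply: geometric_le_lim => //.
by rewrite ger0_norm ?invr_ge0 // invf_lt1 // ltr1n.
Qed.

Lemma tsumS (R : realType) (a : nat) (u : nat -> R) :
  cvgn (fun n => \sum_(a.+1 <= k < n) u k) -> tsum a u = u a + tsum a.+1 u.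
Proof.
move=> hc; rewrite /tsum; apply: (cvg_lim (@Rhausdorff R)).
have h2 : (fun n => u a + \sum_(a.+1 <= k < n) u k) @ \oo --> u a + limn (fun n => \sum_(a.+1 <= k < n) u k).
  by apply: cvgD => //; apply: cvg_cst.
apply: cvg_trans h2; apply: near_eq_cvg; near=> n.
rewrite [RHS]big_ltn //; near: n; by exists a.+1.
Unshelve. all: by end_near.
Qed.

Arguments tsumS {R a u}.

Lemma tsum_split (R : realType) (u : nat -> R) :
  (forall b, cvgn (fun n => \sum_(b <= k < n) u k)) ->
  forall d a, tsum a u = \sum_(a <= k < a + d) u k + tsum (a + d) u.
Proof.
move=> hc; elim=> [|d IH] a; first by rewrite addn0 big_geq // add0r.
rewrite (tsumS (hc _)) (IH a.+1) addSnnS [in RHS]big_ltn ?addrA //.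
by rewrite addnS ltnS leq_addr.
Qed.

Lemma tv_next m N (F : 'I_m -> ('I_m -> 'I_(2 ^ N)%N) -> 'I_(2 ^ N)%N)
  (s s' : state m N) j : tail_variation s s' j -> forall i, next_int F s' i = next_int F s i.
Proof.
move=> [hx [hl h0]] i; rewrite /next_int hx.
case: (eqVneq i j) => [->|hij]; first by rewrite h0.
by rewrite hl.
Qed.

Arguments tv_next {m N} F {s s' j}.

Lemma decrepE (R : realType) m N (hN : (0 < N)%N) (s : state m N) j :
  decrep R s j = (sx s j)%:R + useq R s j 1 + tsum 2 (useq R s j).
Proof.
rewrite /decrep -addrA; congr (_ + _).
change (tsum 1 (useq R s j) = useq R s j 1 + tsum 2 (useq R s j)).
exact (tsumS (@useq_cvg R _ _ hN s j 2)).
Qed.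

Lemma ratio (R : realType) m N (hN : (0 < N)%N)
  (F : 'I_m -> ('I_m -> 'I_(2 ^ N)%N) -> 'I_(2 ^ N)%N) (s s' : state m N) i j :
  tail_variation s s' j -> decrep R s' j != decrep R s j ->
  (gmap R F s' i - gmap R F s i) / (decrep R s' j - decrep R s j) =
  if i == j then 2%:R ^+ N else 0.
Proof.
move=> htv hne; have [hx [hl h0]] := htv.
have hg : gmap R F s' i - gmap R F s i =
    2%:R ^+ N * (tsum 2 (useq R s' i) - tsum 2 (useq R s i)).
  by rewrite /gmap (tv_next F htv) mulrBr; rewrite /useq; lra.
rewrite hg; case: (eqVneq i j) => [eij|hij].
  subst i; rewrite !decrepE // hx.
  have -> : useq R s' j 1 = useq R s j 1 by rewrite /useq /= h0.
  have hD : tsum 2 (useq R s' j) - tsum 2 (useq R s j) != 0.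
    move: hne; rewrite !decrepE // hx.
    have -> : useq R s' j 1 = useq R s j 1 by rewrite /useq /= h0.
    by apply: contra => /eqP h; apply/eqP; lra.
  have -> : (sx s j)%:R + useq R s j 1 + tsum 2 (useq R s' j) -
     ((sx s j)%:R + useq R s j 1 + tsum 2 (useq R s j)) =
     tsum 2 (useq R s' j) - tsum 2 (useq R s j) by lra.
  by rewrite mulfK.
have -> : useq R s' i = useq R s i by rewrite /useq hl.
by rewrite subrr mulr0 mul0r.
Qed.

Lemma exist_var (R : realType) m N (hN : (0 < N)%N) (s : state m N) j (d : R) :
  0 < d -> exists s', tail_variation s s' j /\
      0 < `|decrep R s' j - decrep R s j| < d.
Proof.
move=> d0.
have h1 : (1 < 2 ^ N)%N := leq_ltn_trans hN (ltn_expl N (isT : (1 < 2)%N)).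
have h0 : (0 < 2 ^ N)%N := ltnW h1.
pose K := Num.truncn (2%:R ^+ N / d : R).
pose w := sw s j K.+1.
pose w' : 'I_(2 ^ N) := if (w : nat) == 0%N then Ordinal h1 else Ordinal h0.
have hww : (w' : nat) != w by rewrite /w'; case: (eqVneq (w : nat) 0%N) => [->|hw0] //=; rewrite eq_sym.
pose s' := State (sx s) (fun l n => if (l == j) && (n == K.+1) then w' else sw s l n).
have htv : tail_variation s s' j.
  split=> //; split=> [l hl|]; first by apply/funext => n /=; rewrite (negbTE hl).
  by rewrite /= eqxx.
exists s'; split=> //.
have hu : forall k, k != K.+2 -> useq R s' j k = useq R s j k.
  move=> k hk; rewrite /useq /= eqxx /=.
  case: eqP => // hk'; exfalso; move/eqP: hk; apply; by case: k hk' => // n /= ->.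
have hc := @useq_cvg R _ _ hN.
have E : forall t : state m N, decrep R t j = (sx t j)%:R + useq R t j 1 +
   (\sum_(2 <= k < K.+2) useq R t j k + useq R t j K.+2 + tsum K.+3 (useq R t j)).
  move=> t; rewrite decrepE // (@tsum_split R _ (hc _ t j) K 2) (tsumS (hc _ t j K.+3)).
  lra.
have hS : \sum_(2 <= k < K.+2) useq R s' j k = \sum_(2 <= k < K.+2) useq R s j k.
  by apply: eq_big_nat => k /andP [_ hk]; apply: hu; rewrite ltn_eqF.
have hT : tsum K.+3 (useq R s' j) = tsum K.+3 (useq R s j).
  rewrite /tsum (_ : (fun n => \sum_(K.+3 <= k < n) useq R s' j k) = (fun n => \sum_(K.+3 <= k < n) useq R s j k)) //; apply/funext => n.
  by apply: eq_big_nat => k /andP [hk _]; apply: hu; rewrite gtn_eqF.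
have h1u : useq R s' j 1 = useq R s j 1 by apply: hu.
have -> : decrep R s' j - decrep R s j = useq R s' j K.+2 - useq R s j K.+2.
  by rewrite !E hS hT h1u /=; lra.
rewrite /useq /= eqxx eqxx /= -mulrBl normrM.
set p := 2%:R ^- (N * K.+2).
have p0 : 0 < p by rewrite invr_gt0 exprn_gt0.
rewrite (gtr0_norm p0); apply/andP; split.
  rewrite mulr_gt0 // normr_gt0 subr_eq0 eqr_nat //.
have hw : ((w' : nat) < 2 ^ N)%N by [].
have hw2 : ((w : nat) < 2 ^ N)%N by [].
have hb : `|(w' : nat)%:R - (w : nat)%:R : R| <= 2%:R ^+ N.
  rewrite -natrX; move: hw hw2; rewrite -!(ltr_nat R) => a b.
  rewrite ler_norml; apply/andP; split.
    have : 0 <= (w' : nat)%:R :> R by []. lra.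
  have : 0 <= (w : nat)%:R :> R by []. lra.
apply: (le_lt_trans (ler_wpM2r (ltW p0) hb)).
rewrite /p -natrX -natrX mulrC ltr_pdivrMl ?ltr0n ?expn_gt0 //.
rewrite natrX -ltr_pdivrMr //.
apply: (lt_le_trans (truncnS_gt _)).
rewrite ler_nat -/K.
apply: ltnW; apply: (leq_ltn_trans _ (ltn_expl _ (isT : (1 < 2)%N))).
by rewrite (leq_trans _ (leq_pmull _ hN)) // ltnW.
Qed.

Lemma pd_unique (R : realType) m N (hN : (0 < N)%N)
  (F : 'I_m -> ('I_m -> 'I_(2 ^ N)%N) -> 'I_(2 ^ N)%N) (s : state m N) i j (L : R) :
  partial_deriv F s i j L -> L = if i == j then 2%:R ^+ N else 0.
Proof.
move=> [_ h]; set c := (if i == j then _ else _).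
apply/eqP; rewrite -subr_eq0 -normr_eq0; apply/negPn/negP => hne.
have e0 : 0 < `|L - c| by rewrite lt0r hne normr_ge0.
have [d d0 hd] := h _ e0.
have [s' [tv hlt]] := @exist_var R _ _ hN s j _ d0.
have := hd s' tv hlt.
have hne' : decrep R s' j != decrep R s j.
  by move: hlt => /andP [+ _]; rewrite normr_gt0 subr_eq0.
by rewrite (@ratio R _ _ hN F _ _ i j tv hne') distrC ltxx.
Qed.

Lemma pd_exists (R : realType) m N (hN : (0 < N)%N)
  (F : 'I_m -> ('I_m -> 'I_(2 ^ N)%N) -> 'I_(2 ^ N)%N) (s : state m N) i j :
  partial_deriv F s i j (if i == j then 2%:R ^+ N else 0 : R).
Proof.
split; first by move=> d d0; apply: exist_var.
move=> eps e0; exists 1 => // s' tv hlt.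
have hne' : decrep R s' j != decrep R s j.
  by move: hlt => /andP [+ _]; rewrite normr_gt0 subr_eq0.
by rewrite (@ratio R _ _ hN F _ _ i j tv hne') subrr normr0.
Qed.

Lemma mxpow_scalar (R : realType) m (a : R) n : mxpow (a%:M : 'M[R]_m) n = (a ^+ n)%:M.
Proof. by elim: n => [|n IH] //=; rewrite IH -scalar_mxM exprS. Qed.

Lemma eig_scalar (R : realType) m (hm : (0 < m)%N) (a mu : R) :
  eigenvalue (a%:M : 'M[R]_m) mu <-> mu = a.
Proof.
have v0 : (const_mx 1 : 'rV[R]_m) != 0.
  apply/eqP => /matrixP /(_ 0 (Ordinal hm)); rewrite !mxE => /eqP.
  by rewrite oner_eq0.
split.
  move/eigenvalueP => [v hv vn0]; move: hv; rewrite mul_mx_scalar => /eqP.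
  rewrite -subr_eq0 -scalerBl scaler_eq0 (negbTE vn0) orbF subr_eq0 => /eqP.
  by move=> ->.
move=> ->; apply/eigenvalueP; exists (const_mx 1) => //.
by rewrite mul_mx_scalar.
Qed.

Theorem mainTheorem5 (R : realType) (m N : nat) (hm : (0 < m)%N) (hN : (0 < N)%N)
  (F : 'I_m -> ('I_m -> 'I_(2 ^ N)%N) -> 'I_(2 ^ N)%N) :
  forall s : state m N,
    (forall i, partial_deriv F s i i (2%:R ^+ N : R)) /\
    (forall i j, i != j -> partial_deriv F s i j (0 : R)) /\
    is_jacobian F s ((2%:R ^+ N : R)%:M) /\
    (forall J : 'M[R]_m, is_jacobian F s J ->
       J = (2%:R ^+ N)%:M /\
       (forall n, exists mu : R, eigenvalue ((mxpow J n)^T *m mxpow J n) mu) /\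
       (forall mu : nat -> R,
          (forall n, eigenvalue ((mxpow J n)^T *m mxpow J n) (mu n)) ->
          (fun n => ln `|mu n| / (2 * n%:R)) @ \oo --> N%:R * ln (2 : R))).
Proof.
move=> s.
have pd := @pd_exists R m N hN F s.
have hJ : is_jacobian F s ((2%:R ^+ N : R)%:M).
  move=> i j; rewrite mxE; have := pd i j.
  by case: (i == j); rewrite ?mulr1n ?mulr0n.
split; first by move=> i; have := pd i i; rewrite eqxx.
split; first by move=> i j hij; have := pd i j; rewrite (negbTE hij).
split => // J HJ.
have EJ : J = (2%:R ^+ N)%:M.
  apply/matrixP => i j; rewrite mxE (@pd_unique R _ _ hN F s i j _ (HJ i j)).
  by case: (i == j); rewrite ?mulr1n ?mulr0n.
have EP : forall n, (mxpow J n)^T *m mxpow J n = ((2%:R ^+ N) ^+ n * (2%:R ^+ N) ^+ n : R)%:M.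
  by move=> n; rewrite EJ mxpow_scalar tr_scalar_mx -scalar_mxM.
split => //; split.
  by move=> n; exists ((2%:R ^+ N) ^+ n * (2%:R ^+ N) ^+ n); rewrite EP; apply/eig_scalar.
move=> mu hmu.
have Emu : forall n, mu n = 2%:R ^+ (2 * (N * n)).
  by move=> n; move: (hmu n); rewrite EP => /(@eig_scalar R _ hm) ->; rewrite -!exprM -exprD addnn -mul2n.
apply: cvg_trans (near_eq_cvg _) (cvg_cst (N%:R * ln (2 : R))).
near=> n.
have n0 : (0 < n)%N by near: n; exists 1%N.
rewrite Emu ger0_norm ?exprn_ge0 // lnXn // -[ln 2 *+ _]mulr_natr !natrM.
have : n%:R != 0 :> R by rewrite pnatr_eq0 -lt0n.
move=> hn; field; done.
Unshelve. all: by end_near.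
Qed.
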